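(* Consider the anti-coordination game ($\mathcal V_a=\mathcal V$). (1) If $x^*$ is a Nash equilibrium and $z^*=z(x^* )$, then for every $\epsilon_a\in(\tfrac1n,\tfrac2n]$, $$G_a\!\left(\tfrac{n}{n-1}(z^*-\epsilon_a)\right)\ \ge\ z^*\ \ge\ G_a\!\left(\tfrac{n}{n-1}z^*\right).$$ (2) Conversely, if $z^*\in\{0,\tfrac1n,\dots,1\}$ satisfies these inequalities for every $\epsilon_a\in(\tfrac1n,\tfrac2n]$, then there exists a Nash equilibrium $x^*$ with $z(x^* )=z^*$.
   Context: Let $\mathcal V$ be a finite set of $n\ge2$ agents, all anti-coordinating. Given real weights $d_i$, the anti-coordination game has action set $\{-1,+1\}$, configuration space $\mathcal X=\{-1,+1\}^{\mathcal V}$ and utilities $u_i(x)=-\big(\sum_{j\neq i}x_ix_j-d_ix_i\big)$. A (pure) Nash equilibrium is an $x\in\mathcal X$ with $u_i(x)\ge u_i(y_i,x_{-i})$ for all $i$ and $y_i\in\{-1,+1\}$. Thresholds: $r_i=\tfrac12+\tfrac{d_i}{2(n-1)}$. For $x\in\mathcal X$, $z(x)=\frac1n|\{i: x_i=+1\}|$. The threshold complementary CDF is $G_a(t)=\frac1n|\{i\in\mathcal V: r_i> t\}|$, $t\in\mathbb R$. *)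

(* Defs.v *)
From HB Require Import structures.
From mathcomp Require Import all_boot all_order all_algebra.
Set Implicit Arguments. Unset Strict Implicit. Unset Printing Implicit Defensive.
Import Order.TTheory GRing.Theory Num.Theory.
Local Open Scope ring_scope.

(* Agents are 'I_n.  An action is a bool: true = +1, false = -1. *)
Definition spin (R : numDomainType) (b : bool) : R := if b then 1 else -1.

Definition upd (n : nat) (x : 'I_n -> bool) (i : 'I_n) (y : bool) : 'I_n -> bool :=
  fun j => if j == i then y else x j.

Definition utility (R : numDomainType) (n : nat) (d : 'I_n -> R)
  (x : 'I_n -> bool) (i : 'I_n) : R :=
  - (\sum_(j < n | j != i) spin R (x i) * spin R (x j) - d i * spin R (x i)).

Definition nash (R : numDomainType) (n : nat) (d : 'I_n -> R) (x : 'I_n -> bool) : Prop :=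
  forall (i : 'I_n) (y : bool), utility d (upd x i y) i <= utility d x i.

Definition thr (R : numFieldType) (n : nat) (d : 'I_n -> R) (i : 'I_n) : R :=
  2^-1 + d i / (2 * (n.-1)%:R).

Definition zfrac (R : numFieldType) (n : nat) (x : 'I_n -> bool) : R :=
  #|[set i | x i]|%:R / n%:R.

Definition Ga (R : realFieldType) (n : nat) (d : 'I_n -> R) (t : R) : R :=
  #|[set i | t < thr d i]|%:R / n%:R.

(* Main.v *)
Require Import Defs.
From HB Require Import structures.
From mathcomp Require Import all_boot all_order all_algebra.
From mathcomp Require Import zify ring lra.

Lemma between_sets (T : finType) (A B : {set T}) (k : nat) :
  B \subset A -> (#|B| <= k <= #|A|)%N ->
  exists S : {set T}, [/\ B \subset S, S \subset A & #|S| = k].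
Proof.
move=> BA /andP[Bk kA].
suff H : forall j, (j <= #|A| - #|B|)%N ->
  exists S : {set T}, [/\ B \subset S, S \subset A & #|S| = #|A| - j]%N.
  have [|S [h1 h2 h3]] := H (#|A| - k)%N.
    by rewrite leq_sub2l.
  by exists S; split => //; rewrite h3 subKn.
elim=> [|j IH] hj.
  by exists A; rewrite subn0.
have [S [h1 h2 h3]] := IH (ltnW hj).
have : (0 < #|S :\: B|)%N.
  rewrite cardsD (setIidPr h1) h3 subn_gt0.
  have hBA := subset_leq_card BA.
  lia.
case/card_gt0P=> x xSB.
exists (S :\ x); split.
- apply/subsetP=> y yB; rewrite !inE.
  move: xSB; rewrite inE => /andP[xB _].
  rewrite (subsetP h1 _ yB) andbT; apply/eqP=> e; subst y.
  by rewrite yB in xB.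
- by apply: subset_trans h2; apply: subsetDl.
- move: xSB; rewrite inE => /andP[_ xS].
  have := cardsD1 x S; rewrite xS h3 => e.
  have hBA := subset_leq_card BA.
  lia.
Qed.
Import Order.TTheory GRing.Theory Num.Theory.
Local Open Scope ring_scope.

Section G.
Variables (R : realFieldType) (n : nat) (d : 'I_n -> R).

Lemma spinE b : spin R b = 2 * (b : nat)%:R - 1.
Proof. by case: b => /=; rewrite /spin; lra. Qed.

Lemma sum_spin (x : 'I_n -> bool) :
  \sum_j spin R (x j) = 2 * (#|[set j | x j]|)%:R - n%:R.
Proof.
have -> : #|[set j | x j]| = (\sum_j (x j : nat))%N.
  rewrite -sum1_card big_mkcond /=; apply: eq_bigr => j _; rewrite inE.
  by case: (x j).
rewrite natr_sum mulr_sumr.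
have -> : (n%:R : R) = \sum_(j < n) 1 by rewrite sumr_const card_ord.
rewrite -sumrB.
by apply: eq_bigr => j _; rewrite spinE.
Qed.

Lemma util_upd (x : 'I_n -> bool) i y :
  utility d (upd x i y) i =
  - (spin R y * (2 * (#|[set j | x j]|)%:R - n%:R - spin R (x i)) - d i * spin R y).
Proof.
rewrite /utility /upd eqxx -sum_spin [\sum_j _](bigD1 i) //= [spin R (x i) + _]addrC addrK mulr_sumr.
congr (- (_ - _)); apply: eq_bigr => j /negbTE -> //.
Qed.

Lemma nashE (x : 'I_n -> bool) :
  nash d x <-> forall i, if x i then 2 * (#|[set j | x j]|)%:R - n%:R - 1 <= d i
                         else d i <= 2 * (#|[set j | x j]|)%:R - n%:R + 1.
Proof.
have ux : forall i, utility d x i = utility d (upd x i (x i)) i.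
  by move=> i; rewrite /utility /upd eqxx; congr (- (_ - _)); apply: eq_bigr => j /negbTE ->.
split.
- move=> hN i; have := hN i (~~ x i); rewrite ux !util_upd.
  set M := (2 * _ - _); case: (x i); rewrite /spin /=; lra.
- move=> h i y; rewrite ux !util_upd; have := h i.
  set M := (2 * _ - _); case: (x i); case: y; rewrite /spin /=; lra.
Qed.

End G.

Section M.
Variables (R : realFieldType) (n : nat) (hn : (2 <= n)%N) (d : 'I_n -> R).
Local Notation N := ((n.-1)%:R : R).
Local Notation nR := (n%:R : R).

Lemma N_gt0 : 0 < N. Proof. rewrite ltr0n; lia. Qed.
Lemma nR_gt0 : 0 < nR. Proof. rewrite ltr0n; lia. Qed.
Lemma nRN : nR = N + 1.
Proof. by rewrite natr1 prednK //; lia. Qed.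

Lemma thr_ltE i y : (y < thr d i) = (2 * N * y < N + d i).
Proof.
have hN := N_gt0.
rewrite /thr; have -> : 2^-1 + d i / (2 * N) = (N + d i) / (2 * N).
  by field; rewrite lt0r_neq0.
by rewrite ltr_pdivlMr ?mulr_gt0 // mulrC.
Qed.

Lemma scalE a e : 2 * N * (nR / N * (a / nR - e)) = 2 * (a - nR * e).
Proof.
have hN := N_gt0; have hn' := nR_gt0.
by field; rewrite !lt0r_neq0.
Qed.

Lemma scal0E a : 2 * N * (nR / N * (a / nR)) = 2 * a.
Proof. by have := scalE a 0; rewrite subr0 mulr0 subr0. Qed.

Lemma epsE e : (nR^-1 < e) = (1 < nR * e).
Proof. by rewrite -[nR^-1]mulr1 ltr_pdivrMl // nR_gt0. Qed.

Lemma eps2E e : (e <= 2 / nR) = (nR * e <= 2).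
Proof. by rewrite mulrC ler_pdivlMl // nR_gt0. Qed.

Lemma fracE (a b : nat) : (a%:R / nR <= b%:R / nR) = (a <= b)%N.
Proof. by rewrite ler_pM2r ?invr_gt0 ?nR_gt0 // ler_nat. Qed.

End M.

Theorem corollary2 (R : realFieldType) (n : nat) (hn : (2 <= n)%N) (d : 'I_n -> R) :
  (forall x : 'I_n -> bool, nash d x ->
     forall eps : R, n%:R^-1 < eps -> eps <= 2 / n%:R ->
       zfrac R x <= Ga d (n%:R / (n.-1)%:R * (zfrac R x - eps)) /\
       Ga d (n%:R / (n.-1)%:R * zfrac R x) <= zfrac R x)
  /\
  (forall k : nat, (k <= n)%N ->
     (forall eps : R, n%:R^-1 < eps -> eps <= 2 / n%:R ->
        k%:R / n%:R <= Ga d (n%:R / (n.-1)%:R * (k%:R / n%:R - eps)) /\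
        Ga d (n%:R / (n.-1)%:R * (k%:R / n%:R)) <= k%:R / n%:R) ->
     exists x : 'I_n -> bool, nash d x /\ zfrac R x = k%:R / n%:R).
Proof.
have hnN := @nRN R n hn.
have fE := @fracE R n hn. have e1E := @epsE R n hn. have e2E := @eps2E R n hn.
have tE := @thr_ltE R n hn d. have sE := @scalE R n hn. have s0E := @scal0E R n hn.
have nR0 := @nR_gt0 R n hn.
split.
  move=> x /nashE hx eps he1 he2.
  rewrite e1E in he1; rewrite e2E in he2.
  rewrite /zfrac /Ga !fE; split; apply: subset_leq_card; apply/subsetP=> i;
    rewrite !inE tE ?sE ?s0E //; have := hx i.
  - by case: (x i) => // h _; lra.
  - by case: (x i) => // h; lra.
move=> k hk H.
set A := [set i | 2 * k%:R - 2 <= (n.-1)%:R + d i].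
set B := [set i | 2 * k%:R < (n.-1)%:R + d i].
have BA : B \subset A by apply/subsetP=> i; rewrite !inE; lra.
have hB : (#|B| <= k)%N.
  have ha : n%:R^-1 < 2 / n%:R :> R.
    by rewrite e1E mulrC divfK ?lt0r_neq0 ?nR0 //; lra.
  have hb : 2 / n%:R <= 2 / n%:R :> R by [].
  have [_ h] := H _ ha hb.
  rewrite /Ga fE in h; apply: leq_trans h; apply: subset_leq_card.
  by apply/subsetP=> i; rewrite !inE tE s0E.
have hA : (k <= #|A|)%N.
  pose w := \big[Order.max/(2 * k%:R - 4)]_(i | (n.-1)%:R + d i < 2 * k%:R - 2)
             ((n.-1)%:R + d i : R).
  have w1 : w < 2 * k%:R - 2.
    by apply: bigmax_lt => //; lra.
  have w2 : 2 * k%:R - 4 <= w by apply: bigmax_ge_id.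
  have w3 : forall i, (n.-1)%:R + d i < 2 * k%:R - 2 -> (n.-1)%:R + d i <= w.
    by move=> i hi; apply: (le_bigmax_cond _ _ hi).
  pose e := (2 * k%:R - w) / 2.
  have ne : n%:R * (e / n%:R) = e by rewrite mulrC divfK ?lt0r_neq0 ?nR0.
  have ha : n%:R^-1 < e / n%:R by rewrite e1E ne /e; lra.
  have hb : e / n%:R <= 2 / n%:R by rewrite e2E ne /e; lra.
  have [h _] := H _ ha hb.
  rewrite /Ga fE in h; apply: (leq_trans h); apply: subset_leq_card.
  apply/subsetP=> i; rewrite !inE tE sE ne => hi.
  rewrite leNgt; apply/negP => hi'; have := w3 i hi'; move: hi; rewrite /e; lra.
have [S [h1 h2 h3]] := @between_sets _ A B k BA (introT andP (conj hB hA)).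
have eS : [set j | j \in S] = S by apply/setP=> j; rewrite inE.
exists (fun i => i \in S); split; last by rewrite /zfrac eS h3.
apply/nashE => i; rewrite eS h3.
case: ifP => iS.
- move: (subsetP h2 i iS); rewrite inE => hh; clear -hh hnN; move: hh hnN; set K := k%:R; set D := d i; set M := n%:R; set N := n.-1%:R; move=> *; lra.
- have : i \notin B by apply/negP => /(subsetP h1); rewrite iS.
  rewrite inE -leNgt => hh; clear -hh hnN; move: hh hnN; set K := k%:R; set D := d i; set M := n%:R; set N := n.-1%:R; move=> *; lra.
Qed.
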